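(* Let $q>1$, let $\delta_0,\dots,\delta_{m-1}$ be positive numbers, and set $V_i=\sum_{j=i}^{m-1}\delta_j$ for $0\le i\le m-1$. Then $$\sum_{i=0}^{m-1}\frac{V_i^q}{\delta_i}\ge\frac{q-1}4\sum_{j=1}^{m-1}jV_j^{q-1}.$$ *)

(* Defs.v *)
From Stdlib Require Import Reals Lra.
Open Scope R_scope.

(* V delta m i = sum_{j=i}^{m-1} delta j  (empty sum = 0 when i >= m) *)
Fixpoint tail_sum (delta : nat -> R) (i k : nat) : R :=
  match k with
  | O => 0
  | S k' => delta i + tail_sum delta (S i) k'
  end.

Definition V (delta : nat -> R) (m i : nat) : R := tail_sum delta i (m - i).

Fixpoint rsum (f : nat -> R) (a k : nat) : R :=
  match k with
  | O => 0
  | S k' => f a + rsum f (S a) k'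
  end.

(* Main.v *)
Require Import Defs.
From Stdlib Require Import Reals Lra Psatz Lia.
Open Scope R_scope.
Lemma key (x d p : R) : 0 <= d -> 0 < x - d -> 0 < x -> 0 <= p ->
  Rpower (x - d) p * (x + p * d) <= x * Rpower x p.
Proof.
  intros Hd Hw Hx Hp.
  set (w := x - d) in *.
  assert (Hl : ln w <= ln x - d / x).
  { assert (E : w = x * (w / x)) by (field; lra).
    assert (Hy : 0 < w / x) by (apply Rdiv_lt_0_compat; lra).
    rewrite E, ln_mult by lra.
    pose proof (exp_ineq1_le (ln (w/x))) as H. rewrite exp_ln in H by lra.
    assert (w / x - 1 = - (d / x)) by (unfold w; field; lra). lra. }
  unfold Rpower.
  assert (H1 : exp (p * ln w) <= exp (p * ln x) * exp (- (p * d / x))).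
  { rewrite <- exp_plus. apply exp_le_3 || idtac.
    destruct (Req_dec (p * ln w) (p * ln x + - (p * d / x))) as [E|E].
    - rewrite E; lra.
    - left. apply exp_increasing.
      assert (p * ln w <= p * (ln x - d / x)) by (apply Rmult_le_compat_l; lra).
      assert (p * (ln x - d / x) = p * ln x + - (p * d / x)) by (field; lra). lra. }
  assert (H2 : x + p * d <= x * exp (p * d / x)).
  { pose proof (exp_ineq1_le (p * d / x)).
    assert (x * (1 + p * d / x) = x + p * d) by (field; lra).
    rewrite <- H0. apply Rmult_le_compat_l. left; exact Hx. exact H. }
  assert (Hxd : 0 <= x + p * d).
  { assert (0 <= p * d) by (apply Rmult_le_pos; lra). lra. }
  apply Rle_trans with (exp (p * ln x) * exp (- (p * d / x)) * (x * exp (p * d / x))).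
  - apply Rmult_le_compat; try lra. left; apply exp_pos.
  - assert (exp (- (p * d / x)) * exp (p * d / x) = 1).
    { rewrite <- exp_plus. replace (- (p * d / x) + p * d / x) with 0 by ring. apply exp_0. }
    replace (exp (p * ln x) * exp (- (p * d / x)) * (x * exp (p * d / x)))
      with (x * exp (p * ln x) * (exp (- (p * d / x)) * exp (p * d / x))) by ring.
    rewrite H. lra.
Qed.
Lemma polyA (x D i : R) : 0 < x -> 0 <= D -> (i = 0 \/ 1 <= i) ->
  0 <= 4 * x * (x + D) - D * (i - i * i) * (x + D) - D * ((i + 1) * (i + 1)) * x.
Proof.
  intros Hx HD [Hi|Hi].
  - subst. nra.
  - set (u := D * (i - 1)).
    assert (Hu : 0 <= u) by (unfold u; nra).
    assert (E : 4 * x * (x + D) - D * (i - i * i) * (x + D) - D * ((i + 1) * (i + 1)) * x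
       = 4 * x * x - 3 * x * u + u * u + D * D * (i - 1)) by (unfold u; ring).
    rewrite E. assert (0 <= D * D * (i - 1)) by (apply Rmult_le_pos; [apply Rmult_le_pos; lra | lra]). assert (0 <= (u - 3/2*x)*(u - 3/2*x)) by apply Rle_0_sqr. assert (0 <= x*x) by apply Rle_0_sqr. lra.
Qed.
Lemma termB (x d p a b i : R) : 0 < x -> 0 < d -> 0 < p -> 0 < a -> 0 <= b ->
  b * (x + p * d) <= x * a -> (i = 0 \/ 1 <= i) ->
  (p / 4) * (i * a + (i + 1) * (i + 1) * b - i * i * a) <= x * a / d.
Proof.
  intros Hx Hd Hp Ha Hb Hba Hi.
  assert (HD : 0 <= p * d) by nra.
  pose proof (polyA x (p * d) i Hx HD Hi) as HA.
  set (c := x + p * d) in *.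
  assert (Hc : 0 < c) by (unfold c; lra).
  assert (H1 : (i + 1) * (i + 1) * b * c <= (i + 1) * (i + 1) * (x * a)).
  { rewrite Rmult_assoc. apply Rmult_le_compat_l. nra. lra. }
  apply Rmult_le_reg_r with (4 * d * c). nra.
  replace (x * a / d * (4 * d * c)) with (4 * x * c * a) by (field; lra).
  replace (p / 4 * (i * a + (i + 1) * (i + 1) * b - i * i * a) * (4 * d * c))
    with (p * d * c * (i - i * i) * a + p * d * ((i + 1) * (i + 1) * b * c)) by (field).
  assert (p * d * ((i + 1) * (i + 1) * b * c) <= p * d * ((i + 1) * (i + 1) * (x * a)))
    by (apply Rmult_le_compat_l; lra).
  assert (0 <= a * (4 * x * c - p * d * (i - i * i) * c - p * d * ((i + 1) * (i + 1)) * x))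
    by (apply Rmult_le_pos; lra).
  nra.
Qed.
Lemma rsum_le f g a k : (forall i, (a <= i < a + k)%nat -> f i <= g i) -> rsum f a k <= rsum g a k.
Proof.
  revert a; induction k; intros a H; simpl. lra.
  assert (f a <= g a) by (apply H; lia).
  assert (rsum f (S a) k <= rsum g (S a) k) by (apply IHk; intros; apply H; lia). lra.
Qed.
Lemma rsum_ext f g a k : (forall i, (a <= i < a + k)%nat -> f i = g i) -> rsum f a k = rsum g a k.
Proof.
  revert a; induction k; intros a H; simpl. lra.
  rewrite (H a) by lia. rewrite (IHk (S a)) by (intros; apply H; lia). lra.
Qed.
Lemma rsum_plus f g a k : rsum (fun i => f i + g i) a k = rsum f a k + rsum g a k.
Proof. revert a; induction k; intros a; simpl. lra. rewrite IHk. lra. Qed.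
Lemma rsum_scal c f a k : rsum (fun i => c * f i) a k = c * rsum f a k.
Proof. revert a; induction k; intros a; simpl. lra. rewrite IHk. lra. Qed.
Lemma rsum_tele g a k : rsum (fun i => g (S i) - g i) a k = g (a + k)%nat - g a.
Proof. revert a; induction k; intros a; simpl. rewrite Nat.add_0_r. lra.
  rewrite IHk. replace (S a + k)%nat with (a + S k)%nat by lia. lra. Qed.

Lemma V_succ delta m i : (i < m)%nat -> V delta m i = delta i + V delta m (S i).
Proof. intros H. unfold V. replace (m - i)%nat with (S (m - S i)) by lia. reflexivity. Qed.
Lemma V_m delta m : V delta m m = 0.
Proof. unfold V. rewrite Nat.sub_diag. reflexivity. Qed.
Lemma V_nonneg delta m : (forall i, (i < m)%nat -> 0 < delta i) ->
  forall k i, (i + k = m)%nat -> 0 <= V delta m i.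
Proof.
  intros Hd k. induction k; intros i Hi.
  - replace i with m by lia. rewrite V_m. lra.
  - rewrite V_succ by lia. assert (0 < delta i) by (apply Hd; lia).
    assert (0 <= V delta m (S i)) by (apply IHk; lia). lra.
Qed.
Lemma V_pos delta m i : (forall i, (i < m)%nat -> 0 < delta i) -> (i < m)%nat -> 0 < V delta m i.
Proof.
  intros Hd Hi. rewrite V_succ by lia. assert (0 < delta i) by (apply Hd; lia).
  assert (0 <= V delta m (S i)) by (apply (V_nonneg delta m Hd (m - S i)); lia). lra.
Qed.

Theorem lemma6p6 (q : R) (m : nat) (delta : nat -> R) :
  1 < q ->
  (forall i, (i < m)%nat -> 0 < delta i) ->
  rsum (fun i => Rpower (V delta m i) q / delta i) 0 m >=
  (q - 1) / 4 * rsum (fun j => INR j * Rpower (V delta m j) (q - 1)) 1 (m - 1).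
Proof.
  intros Hq Hd.
  set (p := q - 1).
  assert (Hp : 0 < p) by (unfold p; lra).
  set (bb := fun i => if Nat.ltb i m then Rpower (V delta m i) p else 0).
  set (g := fun i => INR i * INR i * bb i).
  assert (Hbb0 : forall i, 0 <= bb i).
  { intro i. unfold bb. destruct (Nat.ltb i m). unfold Rpower. left; apply exp_pos. lra. }
  assert (Hstep : forall i, (0 <= i < 0 + m)%nat ->
     (p/4) * (INR i * bb i) + (p/4) * (g (S i) - g i) <= Rpower (V delta m i) q / delta i).
  { intros i Hi.
    assert (Hlt : Nat.ltb i m = true) by (apply Nat.ltb_lt; lia).
    assert (Hx : 0 < V delta m i) by (apply V_pos; auto; lia).
    assert (Hdi : 0 < delta i) by (apply Hd; lia).
    assert (HV : V delta m (S i) = V delta m i - delta i) by (rewrite (V_succ delta m i) by lia; ring).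
    assert (Hq' : q = p + 1) by (unfold p; ring).
    rewrite Hq', Rpower_plus, Rpower_1 by lra.
    assert (Ha : 0 < Rpower (V delta m i) p) by (unfold Rpower; apply exp_pos).
    assert (Hb : bb (S i) * (V delta m i + p * delta i) <= V delta m i * Rpower (V delta m i) p).
    { unfold bb. destruct (Nat.ltb (S i) m) eqn:E.
      - apply Nat.ltb_lt in E. rewrite HV. apply key; try lra.
        rewrite <- HV. apply V_pos; auto.
      - rewrite Rmult_0_l. apply Rmult_le_pos; lra. }
    pose proof (termB (V delta m i) (delta i) p (Rpower (V delta m i) p) (bb (S i)) (INR i)
       Hx Hdi Hp Ha (Hbb0 (S i)) Hb) as T.
    assert (Hi' : INR i = 0 \/ 1 <= INR i).
    { destruct i. left; reflexivity. right. apply (le_INR 1). lia. }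
    specialize (T Hi').
    unfold g. rewrite S_INR. unfold bb at 1 3. rewrite Hlt.
    replace (Rpower (V delta m i) p * V delta m i / delta i)
      with (V delta m i * Rpower (V delta m i) p / delta i) by (field; lra).
    lra. }
  apply Rle_ge.
  eapply Rle_trans; [| apply rsum_le; exact Hstep].
  rewrite rsum_plus, rsum_scal.
  rewrite (rsum_scal (p/4) (fun i => g (S i) - g i)).
  rewrite rsum_tele.
  assert (Hg0 : g 0%nat = 0) by (unfold g; simpl; ring).
  assert (Hgm : g (0 + m)%nat = 0).
  { unfold g, bb. simpl. rewrite Nat.ltb_irrefl. ring. }
  rewrite Hg0, Hgm.
  destruct m as [|k].
  - simpl. lra.
  - simpl rsum at 2. replace (S k - 1)%nat with k by lia.
    rewrite (rsum_ext (fun j => INR j * Rpower (V delta (S k) j) p)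
                      (fun i => INR i * bb i) 1 k).
    + simpl INR. lra.
    + intros j Hj. unfold bb. replace (Nat.ltb j (S k)) with true
        by (symmetry; apply Nat.ltb_lt; lia). reflexivity.
Qed.
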